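(* Let $I$ be a conditional indicator w.r.t. $\mathcal{H}$ with domain $\mathbb{D}_I=\mathbb{L}^1(\mathbb{R},\mathcal{F})$ such that: (1) $I^*=I$; (2) $I$ is sub-additive (respectively super-additive); (3) $E(|I(X)|)\le E(|X|)$ for all $X\in\mathbb{L}^1(\mathbb{R},\mathcal{F})$. Then $I(X)=E(X\mid\mathcal{H})$ for all $X\in\mathbb{L}^1(\mathbb{R},\mathcal{F})$.
   Context: Let $(\Omega,\mathcal{F},\mathbb{P})$ be a probability space with $\mathcal{F}$ complete, and $\mathcal{H}\subseteq\mathcal{F}$ a complete sub-$\sigma$-algebra. $\overline{\mathbb{R}}=\mathbb{R}\cup\{\pm\infty\}$ with conventions $r\pm\infty=\pm\infty$, $\infty-\infty=0$, $\infty+\infty=\infty$, $0\times(\pm\infty)=0$; $\mathbb{L}^0(G,\mathcal{G})$ is the set of $\mathcal{G}$-measurable random variables a.s. valued in $G$, $\mathbb{L}^1(\mathbb{R},\mathcal{F})$ the integrable real ones. $\operatorname{ess\,sup}_{\mathcal{H}}(X)$ is the smallest $\mathcal{H}$-measurable random variable dominating $X$ a.s., $\operatorname{ess\,inf}_{\mathcal{H}}(X)=-\operatorname{ess\,sup}_{\mathcal{H}}(-X)$. A conditional indicator w.r.t. $\mathcal{H}$ is a map $I:\mathbb{D}_I\to\mathbb{L}^0(\overline{\mathbb{R}},\mathcal{H})$, $0\in\mathbb{D}_I\subseteq\mathbb{L}^0(\overline{\mathbb{R}},\mathcal{F})$, with $I(X)\in[\operatorname{ess\,inf}_{\mathcal{H}}(X),\operatorname{ess\,sup}_{\mathcal{H}}(X)]$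 a.s. and $\mathbb{D}_I+\mathbb{L}^0(\overline{\mathbb{R}},\mathcal{H})\subseteq\mathbb{D}_I$. The dual is $I^*(X)=-I(-X)$ on $-\mathbb{D}_I$. Sub-additive: $I(X+Y)\le I(X)+I(Y)$; super-additive: $I(X+Y)\ge I(X)+I(Y)$. *)

(* Defs.v *)
From HB Require Import structures.
From mathcomp Require Import all_boot all_order all_algebra.
From mathcomp Require Import all_classical all_reals all_analysis.
From mathcomp Require Import measurable_realfun lebesgue_measure lebesgue_integral.
Set Implicit Arguments. Unset Strict Implicit. Unset Printing Implicit Defensive.
Import Order.TTheory GRing.Theory Num.Theory.
Local Open Scope classical_set_scope.
Local Open Scope ring_scope.
Local Open Scope ereal_scope.

Definition complete_sub_sigma d (T : measurableType d) (R : realType)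
  (P : probability T R) (H : set (set T)) :=
  [/\ sigma_algebra setT H, H `<=` measurable & P.-negligible `<=` H].

Definition Hmeas_bar d (T : measurableType d) (R : realType)
  (H : set (set T)) (f : T -> \bar R) :=
  forall B : set (\bar R), measurable B -> H (f @^-1` B).

Definition Hmeas_real d (T : measurableType d) (R : realType)
  (H : set (set T)) (f : T -> R) :=
  forall B : set R, measurable B -> H (f @^-1` B).

Definition L1 d (T : measurableType d) (R : realType)
  (P : probability T R) (X : T -> R) :=
  measurable_fun setT X /\ P.-integrable setT (EFin \o X).

Definition is_ess_supH d (T : measurableType d) (R : realType)
  (P : probability T R) (H : set (set T)) (X Z : T -> \bar R) :=
  [/\ Hmeas_bar H Z,
      \forall w \ae P, X w <= Z w &
      forall Z', Hmeas_bar H Z' -> (\forall w \ae P, X w <= Z' w) ->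
        \forall w \ae P, Z w <= Z' w].

Definition is_ess_infH d (T : measurableType d) (R : realType)
  (P : probability T R) (H : set (set T)) (X Z : T -> \bar R) :=
  is_ess_supH P H (fun w => - X w) (fun w => - Z w).

(* I is a map on (representatives of) L^1 r.v.'s, compatible with a.s.
   equality, valued in H-measurable extended-real r.v.'s, and with
   ess inf_H X <= I X <= ess sup_H X a.s. *)
Definition cond_indicator_L1 d (T : measurableType d) (R : realType)
  (P : probability T R) (H : set (set T)) (I : (T -> R) -> (T -> \bar R)) :=
  [/\ forall X, L1 P X -> Hmeas_bar H (I X),
      forall X X', L1 P X -> L1 P X' -> X = X' %[ae P] -> I X = I X' %[ae P],
      forall X Z, L1 P X -> is_ess_supH P H (EFin \o X) Z ->
        \forall w \ae P, I X w <= Z w &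
      forall X Z, L1 P X -> is_ess_infH P H (EFin \o X) Z ->
        \forall w \ae P, Z w <= I X w].

Definition dual_ind (T : Type) (R : realType)
  (I : (T -> R) -> (T -> \bar R)) : (T -> R) -> (T -> \bar R) :=
  fun X w => - I (fun t => - X t)%R w.

Definition subadditive_L1 d (T : measurableType d) (R : realType)
  (P : probability T R) (I : (T -> R) -> (T -> \bar R)) :=
  forall X Y, L1 P X -> L1 P Y ->
    \forall w \ae P, I (X \+ Y)%R w <= I X w + I Y w.

Definition superadditive_L1 d (T : measurableType d) (R : realType)
  (P : probability T R) (I : (T -> R) -> (T -> \bar R)) :=
  forall X Y, L1 P X -> L1 P Y ->
    \forall w \ae P, I X w + I Y w <= I (X \+ Y)%R w.

Definition is_cond_exp d (T : measurableType d) (R : realType)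
  (P : probability T R) (H : set (set T)) (X Y : T -> R) :=
  [/\ Hmeas_real H Y, P.-integrable setT (EFin \o Y) &
      forall A, H A ->
        \int[P]_(w in A) (Y w)%:E = \int[P]_(w in A) (X w)%:E].

(* Main.v *)
Require Import Defs.
From HB Require Import structures.
From mathcomp Require Import all_boot all_order all_algebra.
From mathcomp Require Import all_classical all_reals all_analysis.
From mathcomp Require Import measurable_realfun lebesgue_measure lebesgue_integral.
From mathcomp Require Import lra.
Import Order.TTheory GRing.Theory Num.Theory.
Set Implicit Arguments. Unset Strict Implicit. Unset Printing Implicit Defensive.
Local Open Scope classical_set_scope.
Local Open Scope ring_scope.
Local Open Scope ereal_scope.

Section S.
Context (d : measure_display) (T : measurableType d) (R : realType)
  (P : probability T R) (H : set (set T)).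
Hypothesis HH : complete_sub_sigma P H.

Let HT := g_sigma_algebraType H.

Lemma HmE : (measurable : set (set HT)) = H.
Proof. by case: HH => sH _ _; exact: measurable_g_measurableTypeE. Qed.

Lemma Hmeas_realP (f : T -> R) : Hmeas_real H f <-> measurable_fun [set: HT] (f : HT -> R).
Proof.
split.
  move=> hf _ B mB; rewrite setTI HmE; exact: hf.
move=> hf B mB; have := hf measurableT B mB; rewrite setTI HmE; exact.
Qed.

Lemma Hmeas_barP (f : T -> \bar R) : Hmeas_bar H f <-> measurable_fun [set: HT] (f : HT -> \bar R).
Proof.
split.
  move=> hf _ B mB; rewrite setTI HmE; exact: hf.
move=> hf B mB; have := hf measurableT B mB; rewrite setTI HmE; exact.
Qed.

Lemma HsubF A : H A -> measurable A.
Proof. by case: HH => _ + _; apply. Qed.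

Lemma Hmeas_real_meas (f : T -> R) : Hmeas_real H f -> measurable_fun [set: T] f.
Proof. by move=> hf _ B mB; rewrite setTI; apply: HsubF; exact: hf. Qed.

Lemma Hmeas_bar_meas (f : T -> \bar R) : Hmeas_bar H f -> measurable_fun [set: T] f.
Proof. by move=> hf _ B mB; rewrite setTI; apply: HsubF; exact: hf. Qed.


Lemma L1_add (X Y : T -> R) : L1 P X -> L1 P Y -> L1 P (X \+ Y)%R.
Proof.
move=> [mX iX] [mY iY]; split; first exact: measurable_funD.
have -> : EFin \o (X \+ Y)%R = (EFin \o X) \+ (EFin \o Y) by apply/funext=> w.
exact: integrableD.
Qed.

Lemma L1_opp (X : T -> R) : L1 P X -> L1 P (fun t => - X t)%R.
Proof.
move=> [mX iX]; split; first exact: measurableT_comp.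
have -> : EFin \o (fun t => - X t)%R = (fun t => - (EFin \o X) t) by apply/funext=> w.
exact: integrableN.
Qed.

Lemma L1_Hmeas (Z : T -> R) : Hmeas_real H Z -> P.-integrable setT (EFin \o Z) -> L1 P Z.
Proof. by move=> hZ iZ; split => //; exact: Hmeas_real_meas. Qed.

Variable I : (T -> R) -> (T -> \bar R).
Hypothesis HI : cond_indicator_L1 P H I.
Hypothesis Hcontr : forall X, L1 P X ->
     \int[P]_w `|I X w| <= \int[P]_w `|(X w)%:E|.

Lemma I_H (Z : T -> R) : L1 P Z -> Hmeas_real H Z -> I Z = EFin \o Z %[ae P].
Proof.
move=> LZ hZ; case: HI => _ _ Hsup Hinf.
have hZb : Hmeas_bar H (EFin \o Z).
  apply/Hmeas_barP; apply: measurableT_comp => //; exact/Hmeas_realP.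
have h1 := Hsup Z (EFin \o Z) LZ.
have h2 := Hinf Z (EFin \o Z) LZ.
have s1 : is_ess_supH P H (EFin \o Z) (EFin \o Z).
  split => //; first exact: aeW.
have s2 : is_ess_infH P H (EFin \o Z) (EFin \o Z).
  split.
  - apply/Hmeas_barP; apply: measurableT_comp => //; exact/Hmeas_barP.
  - exact: aeW.
  - by move=> Z' _ h.
have := h1 s1; have := h2 s2; apply: filterS2 => w a b _.
by apply/eqP; rewrite eq_le a b.
Qed.

Lemma I_int X : L1 P X -> P.-integrable setT (I X).
Proof.
move=> LX; case: (HI) => hm _ _ _; apply/integrableP; split.
  exact/Hmeas_bar_meas/hm.
apply: (@le_lt_trans _ _ (\int[P]_w `|(X w)%:E|)); first exact: Hcontr.
case: LX => _ /integrableP[] //.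
Qed.

Definition J X := fun w => fine (I X w).

Lemma IJ X : L1 P X -> I X = EFin \o J X %[ae P].
Proof.
move=> LX; have := integrable_ae measurableT (I_int LX).
by apply: filterS => w h /h /fineK.
Qed.

Lemma J_Hmeas X : L1 P X -> Hmeas_real H (J X).
Proof.
move=> LX; case: (HI) => hm _ _ _; apply/Hmeas_realP.
apply: measurableT_comp => //; exact/Hmeas_barP/hm.
Qed.

Lemma J_contr X : L1 P X -> \int[P]_w `|(J X w)%:E| <= \int[P]_w `|(X w)%:E|.
Proof.
move=> LX; apply: le_trans (Hcontr LX); rewrite le_eqVlt; apply/orP; left; apply/eqP.
apply: ae_eq_integral => //.
- apply: measurableT_comp => //; apply: measurableT_comp => //.
  exact/Hmeas_real_meas/J_Hmeas.
- apply: measurableT_comp => //; case: (HI) => hm _ _ _; exact/Hmeas_bar_meas/hm.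
- by have := IJ LX; apply: filterS => w h /h ->.
Qed.

Lemma J_L1 X : L1 P X -> L1 P (J X).
Proof.
move=> LX; have mJ := Hmeas_real_meas (J_Hmeas LX); split => //.
apply/integrableP; split; first exact: measurableT_comp.
apply: le_lt_trans (J_contr LX) _; case: LX => _ /integrableP[] //.
Qed.


Hypothesis Hdual : forall X, L1 P X -> dual_ind I X = I X %[ae P].
Hypothesis Hadd : subadditive_L1 P I \/ superadditive_L1 P I.

Lemma ae_and (A B : T -> Prop) : (\forall x \ae P, A x) -> (\forall x \ae P, B x) ->
  \forall x \ae P, A x /\ B x.
Proof. by apply: filterS2 => x a b. Qed.

Lemma J_add X Y : L1 P X -> L1 P Y -> J (X \+ Y)%R = (J X \+ J Y)%R %[ae P].
Proof.
move=> LX LY.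
have LNX := L1_opp LX; have LNY := L1_opp LY.
have LXY := L1_add LX LY; have LNXY := L1_opp LXY.
have E : (fun t => - (X \+ Y)%R t)%R = ((fun t => - X t) \+ (fun t => - Y t))%R.
  by apply/funext => t /=; rewrite opprD.
have e1 := IJ LX; have e2 := IJ LY; have e3 := IJ LXY; have e4 := IJ LNX.
have e5 := IJ LNY; have e6 := IJ LNXY.
have d1 := Hdual LX; have d2 := Hdual LY; have d3 := Hdual LXY.
rewrite /dual_ind E in d3; rewrite E in e6.
case: Hadd => hs.
- have s1 := hs _ _ LX LY; have s2 := hs _ _ LNX LNY.
  have := ae_and e1 (ae_and e2 (ae_and e3 (ae_and e4 (ae_and e5 (ae_and e6
    (ae_and d1 (ae_and d2 (ae_and d3 (ae_and s1 s2))))))))).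
  apply: filterS => w [e1' [e2' [e3' [e4' [e5' [e6' [d1' [d2' [d3' [s1' s2']]]]]]]]]] _.
  have {}e1' := e1' Logic.I; have {}e2' := e2' Logic.I; have {}e3' := e3' Logic.I.
  have {}e4' := e4' Logic.I; have {}e5' := e5' Logic.I; have {}e6' := e6' Logic.I.
  have {}d1' := d1' Logic.I; have {}d2' := d2' Logic.I; have {}d3' := d3' Logic.I.
  rewrite /dual_ind in d1' d2'.
  rewrite ?e1' ?e2' ?e3' ?e4' ?e5' ?e6' in s1' s2' d1' d2' d3'.
  rewrite /= -?EFinD -?EFinN ?lee_fin in s1' s2' d1' d2' d3'.
  have f1 := EFin_inj d1'; have f2 := EFin_inj d2'; have f3 := EFin_inj d3'.
  rewrite /=; lra.
- have s1 := hs _ _ LX LY; have s2 := hs _ _ LNX LNY.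
  have := ae_and e1 (ae_and e2 (ae_and e3 (ae_and e4 (ae_and e5 (ae_and e6
    (ae_and d1 (ae_and d2 (ae_and d3 (ae_and s1 s2))))))))).
  apply: filterS => w [e1' [e2' [e3' [e4' [e5' [e6' [d1' [d2' [d3' [s1' s2']]]]]]]]]] _.
  have {}e1' := e1' Logic.I; have {}e2' := e2' Logic.I; have {}e3' := e3' Logic.I.
  have {}e4' := e4' Logic.I; have {}e5' := e5' Logic.I; have {}e6' := e6' Logic.I.
  have {}d1' := d1' Logic.I; have {}d2' := d2' Logic.I; have {}d3' := d3' Logic.I.
  rewrite /dual_ind in d1' d2'.
  rewrite ?e1' ?e2' ?e3' ?e4' ?e5' ?e6' in s1' s2' d1' d2' d3'.
  rewrite /= -?EFinD -?EFinN ?lee_fin in s1' s2' d1' d2' d3'.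
  have f1 := EFin_inj d1'; have f2 := EFin_inj d2'; have f3 := EFin_inj d3'.
  rewrite /=; lra.
Qed.


Lemma J_H Z : L1 P Z -> Hmeas_real H Z -> J Z = Z %[ae P].
Proof.
move=> LZ hZ; have := ae_and (IJ LZ) (I_H LZ hZ).
apply: filterS => w [a b] _; apply: EFin_inj.
by rewrite -[LHS]/((EFin \o J Z) w) -a // b.
Qed.

Lemma key X u : L1 P X -> Hmeas_real H u -> P.-integrable setT (EFin \o u) ->
  \int[P]_w `|(u w)%:E| <= \int[P]_w `|(X w - J X w + u w)%:E|.
Proof.
move=> LX hu iu.
pose Z := (u \+ (fun t => - J X t))%R.
have LJ := J_L1 LX.
have LZ : L1 P Z by apply: L1_add; [exact: L1_Hmeas|exact: L1_opp].
have hZ : Hmeas_real H Z.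
  apply/Hmeas_realP; apply: measurable_funD; first exact/Hmeas_realP.
  by apply: measurableT_comp => //; exact/Hmeas_realP/J_Hmeas.
have LXZ := L1_add LX LZ.
have c := J_contr LXZ.
have E1 : \int[P]_w `|(J (X \+ Z)%R w)%:E| = \int[P]_w `|(u w)%:E|.
  apply: ae_eq_integral => //.
  - apply: measurableT_comp => //; apply: measurableT_comp => //.
    exact/Hmeas_real_meas/J_Hmeas.
  - apply: measurableT_comp => //; apply: measurableT_comp => //.
    exact: Hmeas_real_meas.
  - have := ae_and (J_add LX LZ) (J_H LZ hZ).
    apply: filterS => w [a b] _; rewrite a //= b //= /Z /=.
    by congr (`| _ |%:E)%R; rewrite addrC subrK.
rewrite -E1; apply: (le_trans c); rewrite le_eqVlt; apply/orP; left; apply/eqP.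
apply: eq_integral => w _ /=; rewrite /Z /=; congr (abse (EFin _)); lra.
Qed.


Lemma dct_nonneg (a : T -> R) : measurable_fun setT a ->
  P.-integrable setT (EFin \o a) ->
  (forall n : nat, (n%:R)%:E <= \int[P]_w `|(a w + n%:R)%:E|) ->
  0 <= \int[P]_w (a w)%:E.
Proof.
move=> ma ia hn.
pose f_ (n : nat) w := ((`|a w + n%:R| - n%:R)%R)%:E.
have mf n : measurable_fun setT (f_ n).
  apply: measurableT_comp => //; apply: measurable_funB => //.
  apply: measurableT_comp => //; exact: measurable_funD.
have ig : P.-integrable setT (abse \o (EFin \o a)) by exact: integrable_abse.
have fg : \forall x \ae P, forall n, setT x -> `|f_ n x| <= (abse \o (EFin \o a)) x.
  apply: aeW => x n _; rewrite /f_ /= lee_fin.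
  have := ler_dist_dist (a x + n%:R)%R (n%:R)%R.
  by rewrite addrK (ger0_norm (ler0n _ n)).
have ff : \forall x \ae P, setT x -> f_ ^~ x @ \oo --> (EFin \o a) x.
  apply: aeW => x _; apply: cvg_near_cst.
  exists (Num.truncn `|a x|).+1 => // n /= hn'.
  rewrite /f_ ger0_norm; first by congr EFin; rewrite addrK.
  have h1 := truncnS_gt `|a x|.
  have h2 : ((Num.truncn `|a x|).+1%:R <= n%:R :> R)%R by rewrite ler_nat.
  have h3 : (- a x <= `|a x|)%R by rewrite -normrN ler_norm.
  lra.
have mEa : measurable_fun setT (EFin \o a) by apply: measurableT_comp.
have [_ _ cv] := dominated_convergence measurableT mf mEa ff ig fg.
have <- := cvg_lim _ cv => //.
apply: lime_ge; first by apply/cvg_ex; eexists; exact: cv.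
apply: nearW => n.
rewrite /= /f_ (eq_integral (fun w => (`|a w + n%:R|)%:E - (n%:R)%:E)); last by move=> w _; rewrite EFinB.
rewrite (@integralB_EFin _ _ _ P setT (fun w => `|a w + n%:R|%R) (fun _ => n%:R) measurableT).
- rewrite (_ : (fun x => (n%:R)%:E) = cst (n%:R)%:E) // integral_cst //.
  rewrite (_ : (n%:R)%:E * P [set: T] = (n%:R)%:E); last by rewrite probability_setT mule1.
  rewrite sube_ge0 //; exact: hn.
- apply: (eq_integrable measurableT (abse \o (EFin \o (fun x => a x + n%:R)%R))) => //.
  apply: integrable_abse.
  apply: (eq_integrable measurableT ((EFin \o a) \+ (EFin \o cst n%:R))) => //.
  apply: integrableD => //; exact: finite_measure_integrable_cst.
- exact: finite_measure_integrable_cst.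
Qed.


Definition v (A : set T) (w : T) : R := if w \in A then 1%R else (-1)%R.

Lemma vE A w : v A w = (2 * \1_A w - 1)%R.
Proof. by rewrite /v indicE; case: (w \in A) => /=; lra. Qed.

Lemma v_sign A w : v A w = 1%R \/ v A w = (-1)%R.
Proof. by rewrite /v; case: (w \in A); [left|right]. Qed.

Lemma norm_sign (s x n : R) : s = 1%R \/ s = (-1)%R -> `|x + n * s|%R = `|s * x + n|%R.
Proof.
case=> ->; first by rewrite mulr1 mul1r.
by rewrite mulrN1 mulN1r -[in RHS]normrN opprD opprK.
Qed.

Lemma v_HT A : H A -> measurable_fun [set: HT] (v A : HT -> R).
Proof.
move=> HA; rewrite (_ : v A = (fun w => 2 * \1_A w - 1)%R); last by apply/funext => w; rewrite vE.
apply: measurable_funB => //; apply: measurable_funM => //.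
by apply: (@measurable_indic _ HT); rewrite HmE.
Qed.


Lemma ortho_ge X A (s : R) : L1 P X -> H A -> (s = 1 \/ s = -1)%R ->
  0 <= \int[P]_w ((s * v A w) * (X w - J X w))%R%:E.
Proof.
move=> LX HA hs.
pose sg w := (s * v A w)%R.
have sg1 w : sg w = 1%R \/ sg w = (-1)%R.
  by rewrite /sg; case: hs => ->; case: (v_sign A w) => ->; rewrite ?mul1r ?mulN1r ?opprK; tauto.
have msgHT : measurable_fun [set: HT] (sg : HT -> R).
  by apply: measurable_funM => //; exact: v_HT.
have hsg : Hmeas_real H sg by exact/Hmeas_realP.
have msg : measurable_fun setT sg := Hmeas_real_meas hsg.
have LJ := J_L1 LX.
have LD : L1 P (X \+ (fun t => - J X t))%R := L1_add LX (L1_opp LJ).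
have nsg w : `|sg w|%R = 1%R by case: (sg1 w) => ->; rewrite ?normrN normr1.
apply: dct_nonneg.
- by apply: measurable_funM => //; case: LD.
- apply: (le_integrable measurableT _ _ LD.2).
    by apply: measurableT_comp => //; apply: measurable_funM => //; case: LD.
  by move=> w _ /=; rewrite lee_fin normrM nsg mul1r.
- move=> n.
  pose u w := (n%:R * sg w)%R.
  have hu : Hmeas_real H u.
    by apply/Hmeas_realP; apply: measurable_funM => //.
  have iu : P.-integrable setT (EFin \o u).
    apply: (le_integrable measurableT _ _ (finite_measure_integrable_cst P n%:R measurableT)).
      by apply: measurableT_comp => //; exact: Hmeas_real_meas.
    by move=> w _ /=; rewrite lee_fin /u normrM nsg mulr1.
  have := key LX hu iu.
  have -> : \int[P]_w `|(u w)%:E| = \int[P]_w (cst (n%:R)%:E w).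
    by apply: eq_integral => w _ /=; rewrite /u normrM nsg mulr1 ger0_norm.
  rewrite integral_cst // (_ : (n%:R)%:E * P [set: T] = (n%:R)%:E); last by rewrite probability_setT mule1.
  move/le_trans; apply; rewrite le_eqVlt; apply/orP; left; apply/eqP.
  apply: eq_integral => w _ /=; rewrite /u norm_sign //.
Qed.


Lemma ortho0 X A : L1 P X -> H A ->
  \int[P]_w (v A w * (X w - J X w))%R%:E = 0.
Proof.
move=> LX HA.
have LJ := J_L1 LX.
have LD : L1 P (X \+ (fun t => - J X t))%R := L1_add LX (L1_opp LJ).
have mv : measurable_fun setT (v A).
  apply: Hmeas_real_meas; apply/Hmeas_realP; exact: v_HT.
have ig : P.-integrable setT (EFin \o (fun w => v A w * (X w - J X w))%R).
  apply: (le_integrable measurableT _ _ LD.2).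
    by apply: measurableT_comp => //; apply: measurable_funM => //; case: LD.
  move=> w _ /=; rewrite lee_fin normrM.
  by case: (v_sign A w) => ->; rewrite ?normrN normr1 mul1r.
have h1 := ortho_ge LX HA (or_introl erefl).
have h2 := ortho_ge LX HA (or_intror erefl).
have e1 : \int[P]_w ((1 * v A w) * (X w - J X w))%R%:E = \int[P]_w (v A w * (X w - J X w))%R%:E.
  by apply: eq_integral => w _; rewrite mul1r.
have e2 : \int[P]_w ((-1 * v A w) * (X w - J X w))%R%:E = \int[P]_w ((-1)%:E * ((v A w * (X w - J X w))%R)%:E).
  by apply: eq_integral => w _; rewrite -EFinM mulrA.
rewrite e1 in h1; rewrite e2 in h2.
rewrite (integralZl measurableT ig) in h2.
apply/eqP; rewrite eq_le h1 andbT.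
by move: h2; rewrite mulN1e oppe_ge0.
Qed.


Lemma setint0 X Y B : L1 P X -> L1 P Y -> H B ->
  \int[P]_(w in B) (Y w)%:E = \int[P]_(w in B) (X w)%:E ->
  \int[P]_(w in B) (X w - Y w)%R%:E = 0.
Proof.
move=> [mX iX] [mY iY] HB e.
have mB := HsubF HB.
have iXB := integrableS measurableT mB (subsetT _) iX.
have iYB := integrableS measurableT mB (subsetT _) iY.
rewrite (eq_integral (fun w => (X w)%:E - (Y w)%:E)); last by move=> w _; rewrite EFinB.
rewrite (integralB_EFin mB iXB iYB) e subee //; by have := integrable_fin_num mB iXB.
Qed.

Lemma final X Y : L1 P X -> is_cond_exp P H X Y -> J X = Y %[ae P].
Proof.
move=> LX [hY iY pY].
have LY : L1 P Y := L1_Hmeas hY iY.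
have LJ := J_L1 LX.
have hW := J_Hmeas LX.
pose A := [set w | (Y w < J X w)%R].
have HA : H A.
  rewrite -HmE.
  have mf : measurable_fun [set: HT] ((fun w => J X w - Y w)%R : HT -> R).
    by apply: measurable_funB; exact/Hmeas_realP.
  have := mf measurableT `]0%R, +oo[%classic (measurable_itv _).
  rewrite setTI; congr measurable; apply/seteqP; split => w /=;
    rewrite in_itv /= andbT subr_gt0 //.
have HcA : H (~` A).
  have mAH : (measurable : set (set HT)) A by rewrite HmE.
  by have := @measurableC _ HT A mAH; rewrite HmE.
have mA := HsubF HA.
have mv : measurable_fun setT (v A).
  apply: Hmeas_real_meas; apply/Hmeas_realP; exact: v_HT.
have mX := LX.1; have mY := LY.1; have mJ := LJ.1.
have igen (Z : T -> R) : L1 P Z -> P.-integrable setT (EFin \o (fun w => v A w * Z w)%R).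
  move=> [mZ iZ]; apply: (le_integrable measurableT _ _ iZ).
    by apply: measurableT_comp => //; apply: measurable_funM.
  move=> w _ /=; rewrite lee_fin normrM.
  by case: (v_sign A w) => ->; rewrite ?normrN normr1 mul1r.
have LXY : L1 P (X \+ (fun t => - Y t))%R := L1_add LX (L1_opp LY).
have LXW : L1 P (X \+ (fun t => - J X t))%R := L1_add LX (L1_opp LJ).
have i1 := igen _ LXY; have i2 := igen _ LXW.
have o1 : \int[P]_w (v A w * (X w - Y w))%R%:E = 0.
  have mg : measurable_fun setT (fun w => (v A w * (X w - Y w))%R%:E).
    by apply: measurableT_comp => //; apply: measurable_funM => //; case: LXY.
  have sp : \int[P]_w (v A w * (X w - Y w))%R%:E =
     \int[P]_(w in A) (v A w * (X w - Y w))%R%:E + \int[P]_(w in ~` A) (v A w * (X w - Y w))%R%:E.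
    rewrite -integral_setU // ?setUv //; [exact: HsubF HcA|by rewrite disj_set2E setICr eqxx].
  rewrite sp.
  rewrite (eq_integral (fun w => (X w - Y w)%R%:E)); last first.
    by move=> w h; rewrite /v h mul1r.
  rewrite [X in _ + X](eq_integral (fun w => (Y w - X w)%R%:E)); last first.
    by move=> w; rewrite in_setC => /negbTE h; rewrite /v h mulN1r opprB.
  by rewrite !setint0 // ?pY // adde0.
have o2 := ortho0 LX HA.
have eabs : \int[P]_w `|(J X w - Y w)%R%:E| = 0.
  rewrite -[RHS](subee (x := 0)) // -{1}o1 -o2 -integralB_EFin //.
  apply: eq_integral => w _; rewrite -EFinB /=; congr EFin.
  rewrite -mulrBr (_ : (X w - Y w - (X w - J X w))%R = (J X w - Y w)%R); last lra.
  rewrite /v; case: ifPn => [/set_mem /= h|/negP h].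
    by rewrite mul1r gtr0_norm // subr_gt0.
  rewrite mulN1r ler0_norm ?opprB //.
  by rewrite subr_le0 leNgt; apply/negP => h'; apply: h; exact/mem_set.
have mf : measurable_fun setT (fun w => (J X w - Y w)%R%:E).
  by apply: measurableT_comp => //; exact: measurable_funB.
have := (ae_eq_integral_abs P measurableT mf).1 eabs.
apply: filterS => w h /h /= /eqP; rewrite eqe subr_eq0 => /eqP //.
Qed.

End S.

Unset Implicit Arguments.

Theorem mainTheorem11 (d : measure_display) (T : measurableType d)
  (R : realType) (P : probability T R) (H : set (set T))
  (I : (T -> R) -> (T -> \bar R)) :
  measure_is_complete P ->
  complete_sub_sigma P H ->
  cond_indicator_L1 P H I ->
  (forall X, L1 P X -> dual_ind I X = I X %[ae P]) ->
  (subadditive_L1 P I \/ superadditive_L1 P I) ->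
  (forall X, L1 P X ->
     \int[P]_w `|I X w| <= \int[P]_w `|(X w)%:E|) ->
  forall X Y, L1 P X -> is_cond_exp P H X Y ->
    I X = (fun w => (Y w)%:E) %[ae P].
Proof.
move=> _ HH HI Hdual Hadd Hcontr X Y LX hc.
have := ae_and (IJ HH HI Hcontr LX) (final HH HI Hcontr Hdual Hadd LX hc).
apply: filterS => w [a b] _.
by rewrite a //= b.
Qed.
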